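(* Let $\mathbf k=(k_1,\ldots,k_r)\in\mathbb N^r$, $\mathbf m=(m_1,\ldots,m_p)\in\mathbb N^p$, $\boldsymbol\eta=(\eta_1,\ldots,\eta_r)\in\{\pm1\}^r$, $\boldsymbol\varepsilon=(\varepsilon_1,\ldots,\varepsilon_p)\in\{\pm1\}^p$, $|x|<1$, and put $\underline\eta=\eta_1\cdots\eta_r$, $n_0:=n$. Then \[ \mathrm{Mi}_{m_p,\ldots,m_1,k_1+1,k_2,\ldots,k_r}\big(\underline\eta\,\mathbf q(\boldsymbol\varepsilon),\mathbf p(\boldsymbol\eta);x\big) =(-1)^p\sum_{n=1}^\infty\frac{M_{n-1}\big(k_2,\ldots,k_r;\mathbf p(\eta_2,\ldots,\eta_r)\big)}{n^{k_1+1}}\big(1+\underline\eta(-1)^n\big)\sum_{n\ge n_1\ge\cdots\ge n_p\ge1}x^{n_p}\prod_{j=1}^p\frac{1+\varepsilon_j(-1)^{n_{j-1}+n_j}}{n_j^{m_j}} \] \[ -\sum_{j=1}^p(-1)^j\,\mathrm{Mi}_{m_p,\ldots,m_j}\big(-\mathbf q(\varepsilon_{j+1},\ldots,\varepsilon_p),-1;x\big)\,M\Big(\big(\mathbf k;\mathbf p(\boldsymbol\eta)\big)\circledast\big(1,m_1,\ldots,m_{j-1};-\mathbf p(\varepsilon_1,\ldots,\varepsilon_j)\big)^\star\Big) \] \[ -\sum_{j=1}^p(-1)^j\,\mathrm{Mi}_{m_p,\ldots,m_j}\big(\mathbf q(\varepsilon_{j+1},\ldots,\varepsilon_p),1;x\big)\,M\Big(\big(\mathbf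 k;\mathbf p(\boldsymbol\eta)\big)\circledast\big(1,m_1,\ldots,m_{j-1};\mathbf p(\varepsilon_1,\ldots,\varepsilon_j)\big)^\star\Big), \] where for $j=p$ the sign vector of $\mathrm{Mi}$ is just $(-1)$ resp. $(1)$. (The sign vector on the left is the concatenation of $\underline\eta\,\mathbf q(\boldsymbol\varepsilon)$, of length $p$, and $\mathbf p(\boldsymbol\eta)$, of length $r$.)
   Context: For $\boldsymbol\varepsilon=(\varepsilon_1,\ldots,\varepsilon_r)\in\{\pm1\}^r$: $\mathbf p(\boldsymbol\varepsilon)=(\varepsilon_1\cdots\varepsilon_r,\varepsilon_2\cdots\varepsilon_r,\ldots,\varepsilon_r)$, $\mathbf q(\boldsymbol\varepsilon)=(\varepsilon_1\cdots\varepsilon_r,\varepsilon_1\cdots\varepsilon_{r-1},\ldots,\varepsilon_1)$, empty for empty input; $a\boldsymbol\varepsilon=(a\varepsilon_1,\ldots,a\varepsilon_r)$. $M_n(\mathbf k;\boldsymbol\varepsilon)=\sum_{n\ge n_1>\cdots>n_r>0}\prod_j(1+\varepsilon_j(-1)^{n_j})/n_j^{k_j}$ and $M^\star_n(\mathbf k;\boldsymbol\varepsilon)=\sum_{n\ge n_1\ge\cdots\ge n_r\ge1}\prod_j(1+\varepsilon_j(-1)^{n_j})/n_j^{k_j}$, both $=1$ for empty index, $M_0$ of a nonempty index $=0$. $\mathrm{Mi}_{\mathbf k}(\boldsymbol\varepsilon;x)=\sum_{n_1>\cdots>n_r>0}x^{n_1}\prod_j(1+\varepsilon_j(-1)^{n_j})/n_j^{k_j}$.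 Convoluted multiple mixed value: for $\mathbf k\in\mathbb N^r$, $\mathbf l\in\mathbb N^s$, $\boldsymbol\eta\in\{\pm1,0\}\times\{\pm1\}^{r-1}$, $\boldsymbol\varepsilon\in\{\pm1,0\}\times\{\pm1\}^{s-1}$, $(\eta_1,\varepsilon_1)\ne(0,0)$: $M((\mathbf k;\boldsymbol\eta)\circledast(\mathbf l;\boldsymbol\varepsilon)^\star)=\sum_{n\ge1}\frac{M_{n-1}(k_2,\ldots,k_r;\eta_2,\ldots,\eta_r)M^\star_n(l_2,\ldots,l_s;\varepsilon_2,\ldots,\varepsilon_s)}{n^{k_1+l_1}}\cdot\frac{(1+\varepsilon_1(-1)^n)(1+\eta_1(-1)^n)}{2}$. *)

(* Defs.v *)
From Stdlib Require Import Reals List.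
From Coquelicot Require Import Coquelicot.
Import ListNotations.
Open Scope R_scope.

Fixpoint sumR (f : nat -> R) (n : nat) : R :=
  match n with
  | O => 0
  | S n' => sumR f n' + f (S n')
  end.

Definition prodR (l : list R) : R := fold_right Rmult 1 l.

(* p(eps) = (eps1...epsr, eps2...epsr, ..., epsr) *)
Fixpoint pvec (l : list R) : list R :=
  match l with
  | [] => []
  | e :: es => (e * prodR es) :: pvec es
  end.

(* q(eps) = (eps1...epsr, eps1...eps_{r-1}, ..., eps1) *)
Definition qvec (l : list R) : list R :=
  rev (map (fun i => prodR (firstn i l)) (seq 1 (length l))).

Definition scale (a : R) (l : list R) : list R := map (Rmult a) l.

(* M_n(k;eps) = sum_{n >= n1 > ... > nr > 0} prod (1+eps_j(-1)^{n_j})/n_j^{k_j} *)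
Fixpoint Mn (n : nat) (ks : list nat) (es : list R) : R :=
  match ks, es with
  | k :: ks', e :: es' =>
      sumR (fun n1 => (1 + e * (-1) ^ n1) / (INR n1) ^ k * Mn (n1 - 1) ks' es') n
  | _, _ => 1
  end.

(* M*_n(k;eps) = sum_{n >= n1 >= ... >= nr >= 1} prod (1+eps_j(-1)^{n_j})/n_j^{k_j} *)
Fixpoint Mstar (n : nat) (ks : list nat) (es : list R) : R :=
  match ks, es with
  | k :: ks', e :: es' =>
      sumR (fun n1 => (1 + e * (-1) ^ n1) / (INR n1) ^ k * Mstar n1 ks' es') n
  | _, _ => 1
  end.

(* Mi_k(eps;x) = sum_{n1 > ... > nr > 0} x^{n1} prod (1+eps_j(-1)^{n_j})/n_j^{k_j},
   as the series over n1 >= 1 of x^{n1} (1+eps1(-1)^{n1})/n1^{k1} M_{n1-1}(k2..;eps2..). *)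
Definition Mi (ks : list nat) (es : list R) (x : R) : R :=
  match ks, es with
  | k :: ks', e :: es' =>
      Series (fun i => let n1 := S i in
        x ^ n1 * (1 + e * (-1) ^ n1) / (INR n1) ^ k * Mn (n1 - 1) ks' es')
  | _, _ => 1
  end.

Definition conv (ks : list nat) (hs : list R) (ls : list nat) (es : list R) : R :=
  match ks, hs, ls, es with
  | k1 :: ks', h1 :: hs', l1 :: ls', e1 :: es' =>
      Series (fun i => let n := S i in
        Mn (n - 1) ks' hs' * Mstar n ls' es' / (INR n) ^ (k1 + l1)
        * ((1 + e1 * (-1) ^ n) * (1 + h1 * (-1) ^ n) / 2))
  | _, _, _, _ => 0
  end.

(* Tail nprev [m_1..m_p] [eps_1..eps_p] x
   = sum_{nprev >= n1 >= ... >= np >= 1} x^{np} prod_j (1+eps_j(-1)^{n_{j-1}+n_j})/n_j^{m_j},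
   with n_0 = nprev. *)
Fixpoint Tail (nprev : nat) (ms : list nat) (es : list R) (x : R) : R :=
  match ms, es with
  | m :: ms', e :: es' =>
      sumR (fun n1 => (1 + e * (-1) ^ (nprev + n1)) / (INR n1) ^ m * Tail n1 ms' es' x) nprev
  | _, _ => x ^ nprev
  end.

Definition is_sign (e : R) : Prop := e = 1 \/ e = -1.

(* Main.v *)
Require Import Defs.
From Stdlib Require Import Reals List.
From Coquelicot Require Import Coquelicot.
From Stdlib Require Import Lia Lra FunctionalExtensionality.
Import ListNotations.
Open Scope R_scope.

Lemma sumR_ext_le (f g : nat -> R) n :
  (forall i, (1 <= i <= n)%nat -> f i = g i) -> sumR f n = sumR g n.
Proof.
  induction n; simpl; intros H; auto.
  rewrite IHn; [|intros; apply H; lia]. rewrite (H (S n)); auto; lia.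
Qed.

Lemma sumR_ext (f g : nat -> R) n : (forall i, f i = g i) -> sumR f n = sumR g n.
Proof. intros; apply sumR_ext_le; auto. Qed.

Lemma sumR_plus (f g : nat -> R) n : sumR (fun i => f i + g i) n = sumR f n + sumR g n.
Proof. induction n; simpl; [lra|rewrite IHn; lra]. Qed.

Lemma sumR_minus (f g : nat -> R) n : sumR (fun i => f i - g i) n = sumR f n - sumR g n.
Proof. induction n; simpl; [lra|rewrite IHn; lra]. Qed.

Lemma sumR_scal_l (c : R) (f : nat -> R) n : sumR (fun i => c * f i) n = c * sumR f n.
Proof. induction n; simpl; [lra|rewrite IHn; lra]. Qed.

Lemma sumR_scal_r (c : R) (f : nat -> R) n : sumR (fun i => f i * c) n = sumR f n * c.
Proof. induction n; simpl; [lra|rewrite IHn; lra]. Qed.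

Lemma sumR_zero n : sumR (fun _ => 0) n = 0.
Proof. induction n; simpl; [lra|rewrite IHn; lra]. Qed.

Lemma sumR_shift (f : nat -> R) n : sumR f (S n) = f 1%nat + sumR (fun i => f (S i)) n.
Proof. induction n; simpl in *; [lra|]. rewrite IHn. lra. Qed.

Lemma sumR_swap (f : nat -> nat -> R) n q :
  sumR (fun i => sumR (fun j => f i j) q) n = sumR (fun j => sumR (fun i => f i j) n) q.
Proof.
  induction n; simpl.
  - rewrite sumR_zero; auto.
  - rewrite IHn, <- sumR_plus. auto.
Qed.

Lemma fub (a c : nat -> R) L :
  sumR (fun l => c l * sumR a (l - 1)) L = sumR (fun n => a n * (sumR c L - sumR c n)) L.
Proof.
  induction L; simpl; auto.
  rewrite IHL. replace (L - 0)%nat with L by lia.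
  rewrite (sumR_ext (fun n => a n * (sumR c L + c (S L) - sumR c n))
                    (fun n => a n * (sumR c L - sumR c n) + a n * c (S L))).
  2: intros; ring.
  rewrite sumR_plus, sumR_scal_r. ring.
Qed.

Lemma Mn_cons L k ks e es : Mn L (k::ks) (e::es) = sumR (fun n1 => (1 + e * (-1) ^ n1) / INR n1 ^ k * Mn (n1-1) ks es) L.
Proof. destruct L; reflexivity. Qed.
Lemma Mstar_cons L k ks e es : Mstar L (k::ks) (e::es) = sumR (fun n1 => (1 + e * (-1) ^ n1) / INR n1 ^ k * Mstar n1 ks es) L.
Proof. destruct L; reflexivity. Qed.
Lemma Tail_cons L k ks e es x : Tail L (k::ks) (e::es) x = sumR (fun n1 => (1 + e * (-1) ^ (L+n1)) / INR n1 ^ k * Tail n1 ks es x) L.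
Proof. destruct L; reflexivity. Qed.
Lemma Mn_nil L es : Mn L [] es = 1. Proof. destruct L; reflexivity. Qed.
Lemma Mn_nil2 L ks : Mn L ks [] = 1. Proof. destruct L, ks; reflexivity. Qed.
Lemma Mstar_nil L es : Mstar L [] es = 1. Proof. destruct L; reflexivity. Qed.
Lemma Mstar_nil2 L ks : Mstar L ks [] = 1. Proof. destruct L, ks; reflexivity. Qed.
Lemma Tail_nil L es x : Tail L [] es x = x ^ L. Proof. destruct L; reflexivity. Qed.

Definition w (k : nat) (e : R) (i : nat) : R := (1 + e * (-1) ^ i) / (INR i) ^ k.

Fixpoint wl (ks : list nat) (es : list R) {struct ks} : list (nat -> R) :=
  match ks, es with
  | k :: ks', e :: es' => w k e :: wl ks' es'
  | _, _ => []
  end.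

Fixpoint SC (L : nat) (fs : list (nat -> R)) (b : nat -> R) {struct fs} : R :=
  match fs with
  | [] => sumR b L
  | f :: fs' => sumR (fun i => f i * SC (i - 1) fs' b) L
  end.

Definition SD (L : nat) (fs : list (nat -> R)) (phi b : nat -> R) : R :=
  match fs with
  | [] => sumR (fun n => phi n * b n) L
  | f :: fs' => sumR (fun i => phi i * f i * SC (i - 1) fs' b) L
  end.

Fixpoint U (L n : nat) (gs : list (nat -> R)) (phi : nat -> R) {struct gs} : R :=
  match gs with
  | [] => phi n
  | g :: gs' => sumR (fun l => g l * U L l gs' phi) L - sumR (fun l => g l * U L l gs' phi) n
  end.

Fixpoint Wk (n : nat) (gs : list (nat -> R)) (phi : nat -> R) {struct gs} : R :=
  match gs with
  | [] => phi n
  | g :: gs' => sumR (fun l => g l * Wk l gs' phi) n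
  end.

Definition MnP (L : nat) (ks : list nat) (es : list R) (phi : nat -> R) : R :=
  match ks, es with
  | k :: ks', e :: es' => sumR (fun l => phi l * w k e l * Mn (l - 1) ks' es') L
  | _, _ => 0
  end.

Lemma Mn_SC ks1 es1 k e ks2 es2 L : length ks1 = length es1 ->
  Mn L (ks1 ++ k :: ks2) (es1 ++ e :: es2) = SC L (wl ks1 es1) (fun n => w k e n * Mn (n - 1) ks2 es2).
Proof.
  revert es1 L; induction ks1 as [|k' ks1 IH]; intros [|e' es1] L Hl; cbn [SC wl app length] in *; try lia.
  - rewrite Mn_cons. apply sumR_ext; intros; unfold w; auto.
  - rewrite Mn_cons. apply sumR_ext; intros i. rewrite IH by lia. unfold w; auto.
Qed.

Lemma MnP_SD ks1 es1 k e ks2 es2 L phi : length ks1 = length es1 ->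
  MnP L (ks1 ++ k :: ks2) (es1 ++ e :: es2) phi = SD L (wl ks1 es1) phi (fun n => w k e n * Mn (n - 1) ks2 es2).
Proof.
  destruct ks1 as [|k' ks1], es1 as [|e' es1]; cbn [MnP SD wl app length]; intros Hl; try lia.
  - apply sumR_ext; intros; ring.
  - apply sumR_ext; intros i. rewrite Mn_SC by lia. auto.
Qed.

Lemma SC_app fs g a L : SC L (fs ++ [g]) a = SC L fs (fun l => g l * sumR a (l - 1)).
Proof.
  revert L; induction fs as [|f fs IH]; intros L; simpl; auto.
  apply sumR_ext; intros; rewrite IH; auto.
Qed.

Lemma SD_app fs g phi a L : SD L (fs ++ [g]) phi a = SD L fs phi (fun l => g l * sumR a (l - 1)).
Proof.
  destruct fs as [|f fs]; simpl.
  - apply sumR_ext; intros; ring.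
  - apply sumR_ext; intros; rewrite SC_app; auto.
Qed.

Lemma SD_fub gs L phi a : SD L (rev gs) phi a = sumR (fun n => a n * U L n gs phi) L.
Proof.
  revert a; induction gs as [|g gs IH]; intros a; simpl.
  - apply sumR_ext; intros; ring.
  - rewrite SD_app, IH.
    rewrite (sumR_ext _ (fun l => (g l * U L l gs phi) * sumR a (l - 1))) by (intros; ring).
    apply fub.
Qed.

Lemma U0 g gs L phi : U L 0 (g :: gs) phi = SD L (rev gs) phi g.
Proof. simpl. rewrite SD_fub. simpl. rewrite Rminus_0_r. apply sumR_ext; auto. Qed.

Lemma U_decomp gs L phi n : (n <= L)%nat ->
  U L n gs phi = sumR (fun j => (-1) ^ (j - 1) * Wk n (firstn (j - 1) gs) (fun _ => 1)
                              * U L 0 (skipn (j - 1) gs) phi) (length gs)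
                 + (-1) ^ (length gs) * Wk n gs phi.
Proof.
  revert n; induction gs as [|g gs IH]; intros n Hn; cbn [U Wk length].
  - simpl; ring.
  - rewrite sumR_shift. cbn [firstn skipn Nat.sub pow Wk]. rewrite Rmult_1_r, Rmult_1_l.
    rewrite (sumR_ext_le (fun l => g l * U L l gs phi)
      (fun l => sumR (fun j => g l * ((-1) ^ (j - 1) * Wk l (firstn (j - 1) gs) (fun _ => 1)
                              * U L 0 (skipn (j - 1) gs) phi)) (length gs)
               + (-1) ^ length gs * (g l * Wk l gs phi)) n).
    2:{ intros i Hi. rewrite IH by lia. rewrite sumR_scal_l. ring. }
    rewrite sumR_plus, sumR_swap, sumR_scal_l.
    assert (E0: U L 0 (g :: gs) phi = sumR (fun l => g l * U L l gs phi) L).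
    { cbn [U]. change (sumR (fun l => g l * U L l gs phi) 0) with 0. ring. }
    rewrite E0.
    rewrite (sumR_ext_le (fun i => (-1) ^ (i - 0) * Wk n (firstn (i - 0) (g :: gs)) (fun _ => 1) *
                                U L 0 (skipn (i - 0) (g :: gs)) phi)
       (fun j => - sumR (fun i => g i * ((-1) ^ (j - 1) * Wk i (firstn (j - 1) gs) (fun _ => 1)
                 * U L 0 (skipn (j - 1) gs) phi)) n)).
    2:{ intros j Hj. destruct j as [|j].
        - lia.
        - rewrite Nat.sub_0_r. replace (S j - 1)%nat with j by lia.
          cbn [firstn skipn Wk].
          rewrite (sumR_ext (fun i => g i * ((-1) ^ j * Wk i (firstn j gs) (fun _ => 1) * U L 0 (skipn j gs) phi))
             (fun i => ((-1) ^ j * U L 0 (skipn j gs) phi) * (g i * Wk i (firstn j gs) (fun _ => 1))))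
            by (intros; ring).
          rewrite sumR_scal_l. simpl. ring. }
    rewrite (sumR_ext (fun j => - _) (fun j => -1 * sumR (fun i => g i * ((-1) ^ (j - 1) * Wk i (firstn (j - 1) gs) (fun _ => 1)
                 * U L 0 (skipn (j - 1) gs) phi)) n)) by (intros; ring).
    rewrite sumR_scal_l. ring.
Qed.

Fixpoint sl (c : R) (es : list R) : list R :=
  match es with
  | [] => []
  | e :: es' => (c * e) :: sl (c * e) es'
  end.

Definition pre (l : list R) := map (fun i => prodR (firstn i l)) (seq 1 (length l)).

Lemma sign_mult a b : is_sign a -> is_sign b -> is_sign (a * b).
Proof. unfold is_sign; intros [->| ->] [->| ->]; lra. Qed.
Lemma sign_sq a : is_sign a -> a * a = 1.
Proof. unfold is_sign; intros [->| ->]; lra. Qed.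
Lemma sign_m1 a : is_sign a -> is_sign (- a).
Proof. unfold is_sign; intros [->| ->]; lra. Qed.
Lemma pow_m1_sign n : is_sign ((-1) ^ n).
Proof. induction n; simpl. left; auto. replace (-1 * (-1)^n) with (-((-1)^n)) by ring. apply sign_m1; auto. Qed.
Lemma prodR_sign l : List.Forall is_sign l -> is_sign (prodR l).
Proof. induction 1; simpl. left; auto. apply sign_mult; auto. Qed.
Lemma sign_cases a b : is_sign a -> is_sign b -> a = b \/ a = - b.
Proof. unfold is_sign; intros [->| ->] [->| ->]; lra. Qed.

Lemma seq_shift' a n : seq (S a) n = map S (seq a n).
Proof. revert a; induction n; intros a; simpl; auto. rewrite IHn; auto. Qed.

Lemma sl_pre c l : sl c l = scale c (pre l).
Proof.
  revert c; induction l as [|e l IH]; intros c; simpl; auto.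
  unfold pre; simpl. f_equal. ring.
  rewrite IH. unfold scale, pre. rewrite (seq_shift' 1), !map_map. apply map_ext; intros i. simpl. ring.
Qed.

Lemma qvec_sl c l : scale c (qvec l) = rev (sl c l).
Proof. rewrite sl_pre. unfold scale, qvec. rewrite map_rev. auto. Qed.

Lemma length_sl c l : length (sl c l) = length l.
Proof. revert c; induction l; simpl; auto. Qed.

Lemma length_wl ks es : length (wl ks es) = Nat.min (length ks) (length es).
Proof. revert es; induction ks; intros [|e es]; simpl; auto. Qed.

Lemma wl_app ks1 es1 ks2 es2 : length ks1 = length es1 ->
  wl (ks1 ++ ks2) (es1 ++ es2) = wl ks1 es1 ++ wl ks2 es2.
Proof. revert es1; induction ks1; intros [|e es1]; simpl; intros H; try lia; auto. rewrite IHks1; auto. Qed.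

Lemma wl_rev ks es : length ks = length es -> rev (wl ks es) = wl (rev ks) (rev es).
Proof.
  revert es; induction ks; intros [|e es]; simpl; intros H; try lia; auto.
  rewrite wl_app by (rewrite !length_rev; lia). rewrite IHks by lia. auto.
Qed.

Lemma wl_firstn k ks es : firstn k (wl ks es) = wl (firstn k ks) (firstn k es).
Proof. revert k es; induction ks; intros [|k] [|e es]; simpl; auto. rewrite IHks; auto. Qed.

Lemma wl_skipn k ks es : skipn k (wl ks es) = wl (skipn k ks) (skipn k es).
Proof. revert k es; induction ks; intros [|k] [|e es]; simpl; auto.
  all: try (destruct (skipn k ks); auto). Qed.

Lemma sl_firstn k c l : firstn k (sl c l) = sl c (firstn k l).
Proof. revert k c; induction l; intros [|k] c; simpl; auto. rewrite IHl; auto. Qed.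

Lemma sl_ext c c' l : c = c' -> sl c l = sl c' l.
Proof. intros ->; auto. Qed.

Lemma sl_skipn k c l : skipn k (sl c l) = sl (c * prodR (firstn k l)) (skipn k l).
Proof.
  revert k c; induction l; intros [|k] c; simpl; auto.
  all: try (rewrite Rmult_1_r; reflexivity).
  all: try (rewrite IHl; apply sl_ext; ring).
Qed.

Lemma sl_skipn_cons k c l : (k < length l)%nat ->
  skipn k (sl c l) = (c * prodR (firstn (S k) l)) :: skipn (S k) (sl c l).
Proof.
  revert k c; induction l as [|e l IH]; intros [|k] c; simpl; intros H; try lia.
  - f_equal. ring.
  - rewrite IH by lia. f_equal. simpl. ring.
Qed.

Lemma skipn_cons_nth {A} k (l : list A) d : (k < length l)%nat ->
  skipn k l = nth k l d :: skipn (S k) l.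
Proof. revert k; induction l; intros [|k]; simpl; intros H; try lia; auto. apply IHl; lia. Qed.

Lemma sl_removelast es e s : List.Forall is_sign (e :: es) ->
  sl (s * prodR (e :: es)) (removelast (e :: es)) = scale s (pvec es).
Proof.
  revert e; induction es as [|e' es IH]; intros e H; simpl; auto.
  inversion H; subst. inversion H3; subst.
  f_equal.
  - simpl. transitivity (s * (e * e) * (e' * prodR es)); [ring|]. rewrite sign_sq by auto. ring.
  - rewrite <- (IH e') by auto. apply sl_ext. simpl. transitivity (s * (e * e) * (e' * prodR es)); [ring|].
    rewrite sign_sq by auto. ring.
Qed.

Lemma Mstar_Wk n ks es : Mstar n ks es = Wk n (wl ks es) (fun _ => 1).
Proof.
  revert n es; induction ks; intros n [|e es]; simpl wl; cbn [Wk].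
  - apply Mstar_nil.
  - apply Mstar_nil.
  - apply Mstar_nil2.
  - rewrite Mstar_cons. apply sumR_ext; intros; rewrite IHks; unfold w; auto.
Qed.

Lemma Tail_Wk m eps x c n : List.Forall is_sign eps -> is_sign c -> (-1) ^ n = c ->
  Tail n m eps x = Wk n (wl m (sl c eps)) (fun l => x ^ l).
Proof.
  revert eps c n; induction m as [|k m IH]; intros [|e eps] c n He Hc Hn; simpl sl; simpl wl; cbn [Wk].
  - apply Tail_nil.
  - apply Tail_nil.
  - destruct n; reflexivity.
  - inversion He as [|? ? He1 He2]. rewrite Tail_cons. apply sumR_ext; intros i. unfold w.
    rewrite pow_add, Hn.
    destruct (sign_cases ((-1) ^ i) (c * e)) as [E|E]; auto using pow_m1_sign, sign_mult.
    + rewrite (IH eps (c * e) i); auto using sign_mult. f_equal. f_equal. ring.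
    + rewrite E. replace (1 + e * (c * - (c * e))) with (1 - (c*c)*(e*e)) by ring.
      replace (1 + c * e * - (c * e)) with (1 - (c*c)*(e*e)) by ring.
      rewrite !sign_sq by auto. unfold Rdiv. ring.
Qed.

Definition CPg (ks : list nat) (hs : list R) (ls : list nat) (es : list R) (L : nat) : R :=
  match ks, hs, ls, es with
  | k1 :: ks', h1 :: hs', l1 :: ls', e1 :: es' =>
      sumR (fun n => Mn (n - 1) ks' hs' * Mstar n ls' es' / (INR n) ^ (k1 + l1)
        * ((1 + e1 * (-1) ^ n) * (1 + h1 * (-1) ^ n) / 2)) L
  | _, _, _, _ => 0
  end.

Lemma Forall_firstn' {A} (P : A -> Prop) k l : List.Forall P l -> List.Forall P (firstn k l).
Proof. revert k; induction l; intros [|k] H; simpl; auto. inversion H; subst; constructor; auto. Qed.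

Lemma Tj (k1 : nat) ks h1 hs m eps x s j L :
  length eps = length m -> (1 <= j <= length m)%nat -> is_sign h1 -> List.Forall is_sign hs ->
  List.Forall is_sign eps -> is_sign s ->
  sumR (fun n => w (S k1) (prodR (h1 :: hs)) n * Mn (n - 1) ks (pvec hs)
          * ((1 + s * prodR (firstn j eps) * (-1) ^ n) / 2)
          * Wk n (firstn (j - 1) (wl m (sl (prodR (h1 :: hs)) eps))) (fun _ => 1)) L
   * U L 0 (skipn (j - 1) (wl m (sl (prodR (h1 :: hs)) eps))) (fun l => x ^ l)
  = CPg (k1 :: ks) (pvec (h1 :: hs)) (1%nat :: firstn (j - 1) m) (scale s (pvec (firstn j eps))) L
    * MnP L (rev (skipn (j - 1) m)) (scale s (qvec (skipn j eps)) ++ [s]) (fun l => x ^ l).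
Proof.
  intros Hlen Hj Hh1 Hhs Heps Hs.
  destruct j as [|j']; [lia|]. replace (S j' - 1)%nat with j' by lia.
  assert (Hsh : is_sign (prodR hs)) by (apply prodR_sign; auto).
  assert (Heb : is_sign (prodR (h1 :: hs))) by (simpl; apply sign_mult; auto).
  assert (Hc : is_sign (prodR (firstn (S j') eps))) by (apply prodR_sign, Forall_firstn'; auto).
  set (eb := prodR (h1 :: hs)) in *.
  set (c := prodR (firstn (S j') eps)) in *.
  assert (HCP : CPg (k1 :: ks) (pvec (h1 :: hs)) (1%nat :: firstn j' m) (scale s (pvec (firstn (S j') eps))) L
     = sumR (fun n => Mn (n - 1) ks (pvec hs) * Mstar n (firstn j' m) (tl (scale s (pvec (firstn (S j') eps))))
          / (INR n) ^ (k1 + 1) * ((1 + s * c * (-1) ^ n) * (1 + eb * (-1) ^ n) / 2)) L).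
  { destruct eps as [|e0 eps']; simpl in Hlen; [lia|].
    unfold c, eb. simpl firstn. simpl pvec. unfold scale. simpl map. cbn [CPg tl].
    apply sumR_ext; intros n; try reflexivity; repeat f_equal; ring. }
  rewrite HCP.
  destruct (sign_cases eb (s * c)) as [E|E]; auto using sign_mult.
  -
    assert (HW : firstn j' (wl m (sl eb eps)) = wl (firstn j' m) (tl (scale s (pvec (firstn (S j') eps))))).
    { rewrite wl_firstn, sl_firstn. f_equal.
      destruct eps as [|e0 eps']; simpl in Hlen; [lia|].
      rewrite <- removelast_firstn by (simpl; lia).
      simpl firstn. unfold c in E. simpl firstn in E. rewrite E.
      rewrite sl_removelast. unfold scale; simpl; auto.
      apply Forall_firstn' with (k := S j') in Heps. exact Heps. }
    rewrite HW. f_equal.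
    + apply sumR_ext; intros n. rewrite Mstar_Wk. rewrite Nat.add_1_r. unfold w. unfold Rdiv. ring.
    +
      assert (Hj'm : (j' < length m)%nat) by lia.
      assert (Hj'e : (j' < length eps)%nat) by lia.
      rewrite wl_skipn, sl_skipn_cons by auto. rewrite sl_skipn.
      fold c.
      assert (Ec : eb * c = s) by (rewrite E; transitivity (s * (c * c)); [ring|]; rewrite sign_sq; auto; ring).
      rewrite Ec.
      rewrite (skipn_cons_nth j' m 0%nat Hj'm).
      cbn [wl]. rewrite U0.
      rewrite wl_rev by (rewrite length_sl, !length_skipn; lia).
      rewrite <- qvec_sl.
      cbn [rev]. rewrite MnP_SD by (rewrite qvec_sl, !length_rev, length_sl, !length_skipn; lia).
      f_equal. extensionality n. rewrite Mn_nil. ring.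
  - (* degenerate case: everything vanishes *)
    assert (Z : forall n, (1 + eb * (-1) ^ n) * (1 + s * c * (-1) ^ n) = 0).
    { intros n. rewrite E. replace (1 + - (s * c) * (-1) ^ n) with (1 - s * c * (-1) ^ n) by ring.
      transitivity (1 - (s*s) * (c*c) * ((-1)^n * (-1)^n)); [ring|].
      rewrite (sign_sq s), (sign_sq c), (sign_sq ((-1)^n)); auto using pow_m1_sign; ring. }
    rewrite (sumR_ext_le _ (fun _ => 0)).
    rewrite (sumR_ext_le (fun n => Mn (n - 1) ks (pvec hs) * _ / _ * _) (fun _ => 0)).
    + rewrite !sumR_zero; ring.
    + intros n _. transitivity ((1 + eb * (-1) ^ n) * (1 + s * c * (-1) ^ n) *
         (Mn (n - 1) ks (pvec hs) * Mstar n (firstn j' m) (tl (scale s (pvec (firstn (S j') eps)))) / INR n ^ (k1 + 1) / 2)).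
      * unfold Rdiv; ring.
      * rewrite Z; ring.
    + intros n _. unfold w. transitivity ((1 + eb * (-1) ^ n) * (1 + s * c * (-1) ^ n) *
         (/ INR n ^ S k1 * Mn (n - 1) ks (pvec hs) / 2 * Wk n (firstn j' (wl m (sl eb eps))) (fun _ => 1))).
      * unfold Rdiv; ring.
      * rewrite Z; ring.
Qed.

Lemma scale1 l : scale 1 l = l.
Proof. unfold scale. rewrite <- (map_id l) at 2. apply map_ext; intros; ring. Qed.

Lemma Fin (k1 : nat) ks h1 hs m eps x L :
  length hs = length ks -> length eps = length m ->
  is_sign h1 -> List.Forall is_sign hs -> List.Forall is_sign eps ->
  MnP L (rev m ++ (S k1) :: ks) (scale (prodR (h1 :: hs)) (qvec eps) ++ pvec (h1 :: hs)) (fun l => x ^ l)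
  = (-1) ^ (length m) * sumR (fun n => Mn (n - 1) ks (pvec hs) / (INR n) ^ (k1 + 1)
        * (1 + prodR (h1 :: hs) * (-1) ^ n) * Tail n m eps x) L
    - sumR (fun j => (-1) ^ j
        * MnP L (rev (skipn (j - 1) m)) (scale (-1) (qvec (skipn j eps)) ++ [-1]) (fun l => x ^ l)
        * CPg (k1 :: ks) (pvec (h1 :: hs)) (1%nat :: firstn (j - 1) m)
               (scale (-1) (pvec (firstn j eps))) L) (length m)
    - sumR (fun j => (-1) ^ j
        * MnP L (rev (skipn (j - 1) m)) (qvec (skipn j eps) ++ [1]) (fun l => x ^ l)
        * CPg (k1 :: ks) (pvec (h1 :: hs)) (1%nat :: firstn (j - 1) m)
               (pvec (firstn j eps)) L) (length m).
Proof.
  intros Hl1 Hl2 Hh1 Hhs Heps.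
  assert (Hsh : is_sign (prodR hs)) by (apply prodR_sign; auto).
  assert (Heb : is_sign (prodR (h1 :: hs))) by (simpl; apply sign_mult; auto).
  set (eb := prodR (h1 :: hs)) in *.
  change (pvec (h1 :: hs)) with (eb :: pvec hs) at 1.
  rewrite MnP_SD by (rewrite qvec_sl, !length_rev, length_sl; lia).
  rewrite qvec_sl, <- wl_rev by (rewrite length_sl; lia).
  rewrite SD_fub.
  set (gs := wl m (sl eb eps)).
  assert (Hgs : length gs = length m) by (unfold gs; rewrite length_wl, length_sl; lia).
  set (a := fun n => w (S k1) eb n * Mn (n - 1) ks (pvec hs)).
  rewrite (sumR_ext_le (fun n => a n * U L n gs (fun l => x ^ l))
     (fun n => sumR (fun j => (-1) ^ (j - 1) * (a n * Wk n (firstn (j - 1) gs) (fun _ => 1))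
                 * U L 0 (skipn (j - 1) gs) (fun l => x ^ l)) (length gs)
               + (-1) ^ length gs * (a n * Wk n gs (fun l => x ^ l)))).
  2:{ intros n Hn. rewrite U_decomp by lia. rewrite Rmult_plus_distr_l, <- sumR_scal_l.
      f_equal; [apply sumR_ext; intros; ring| ring]. }
  rewrite sumR_plus, sumR_swap, sumR_scal_l, Hgs.
  assert (HJ : forall j, (1 <= j <= length m)%nat ->
    sumR (fun n => (-1) ^ (j - 1) * (a n * Wk n (firstn (j - 1) gs) (fun _ => 1))
                 * U L 0 (skipn (j - 1) gs) (fun l => x ^ l)) L
    = - ((-1) ^ j * MnP L (rev (skipn (j - 1) m)) (scale (-1) (qvec (skipn j eps)) ++ [-1]) (fun l => x ^ l)
        * CPg (k1 :: ks) (pvec (h1 :: hs)) (1%nat :: firstn (j - 1) m) (scale (-1) (pvec (firstn j eps))) L)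
       - ((-1) ^ j * MnP L (rev (skipn (j - 1) m)) (qvec (skipn j eps) ++ [1]) (fun l => x ^ l)
        * CPg (k1 :: ks) (pvec (h1 :: hs)) (1%nat :: firstn (j - 1) m) (pvec (firstn j eps)) L)).
  { intros j Hj.
    destruct j as [|j']; [lia|].
    pose proof (Tj k1 ks h1 hs m eps x (-1) (S j') L Hl2 Hj Hh1 Hhs Heps ltac:(right; auto)) as H1.
    pose proof (Tj k1 ks h1 hs m eps x 1 (S j') L Hl2 Hj Hh1 Hhs Heps ltac:(left; auto)) as H2.
    rewrite !scale1 in H2. fold eb gs in H1, H2.
    replace (S j' - 1)%nat with j' in * by lia.
    set (UU := U L 0 (skipn j' gs) (fun l => x ^ l)) in *.
    set (W := fun n => Wk n (firstn j' gs) (fun _ => 1)) in *.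
    set (c := prodR (firstn (S j') eps)) in *.
    rewrite (sumR_ext _ (fun n => ((-1) ^ j' * UU) *
       ((w (S k1) eb n * Mn (n - 1) ks (pvec hs) * ((1 + -1 * c * (-1) ^ n) / 2) * W n)
        + (w (S k1) eb n * Mn (n - 1) ks (pvec hs) * ((1 + 1 * c * (-1) ^ n) / 2) * W n))))
      by (intros; unfold a, W; field).
    rewrite sumR_scal_l, sumR_plus.
    transitivity ((-1) ^ j' * (sumR (fun n => w (S k1) eb n * Mn (n - 1) ks (pvec hs) * ((1 + -1 * c * (-1) ^ n) / 2) * W n) L * UU)
       + (-1) ^ j' * (sumR (fun n => w (S k1) eb n * Mn (n - 1) ks (pvec hs) * ((1 + 1 * c * (-1) ^ n) / 2) * W n) L * UU)).
    { ring. }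
    unfold W. rewrite H1, H2. simpl pow. ring. }
  rewrite (sumR_ext_le _ _ _ HJ).
  rewrite sumR_minus.
  rewrite (sumR_ext (fun j => - _) (fun j => -1 * ((-1) ^ j * MnP L (rev (skipn (j - 1) m)) (scale (-1) (qvec (skipn j eps)) ++ [-1]) (fun l => x ^ l)
        * CPg (k1 :: ks) (pvec (h1 :: hs)) (1%nat :: firstn (j - 1) m) (scale (-1) (pvec (firstn j eps))) L))) by (intros; ring).
  rewrite sumR_scal_l.
  rewrite (sumR_ext (fun n => a n * Wk n gs (fun l => x ^ l))
     (fun n => Mn (n - 1) ks (pvec hs) / (INR n) ^ (k1 + 1) * (1 + eb * (-1) ^ n) * Tail n m eps x)).
  { ring. }
  intros n. unfold a, w. rewrite Nat.add_1_r.
  destruct (sign_cases ((-1) ^ n) eb) as [E|E]; auto using pow_m1_sign.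
  - rewrite (Tail_Wk m eps x eb n) by auto. fold gs. unfold Rdiv. ring.
  - rewrite E. replace (1 + eb * - eb) with (1 - eb * eb) by ring. rewrite sign_sq by auto.
    unfold Rdiv. ring.
Qed.

Lemma sumR_abs f n : Rabs (sumR f n) <= sumR (fun i => Rabs (f i)) n.
Proof. induction n; simpl. rewrite Rabs_R0; lra. eapply Rle_trans; [apply Rabs_triang|]. lra. Qed.

Lemma sumR_le f g n : (forall i, (1 <= i <= n)%nat -> f i <= g i) -> sumR f n <= sumR g n.
Proof. induction n; simpl; intros H. lra. apply Rplus_le_compat; [apply IHn; intros; apply H; lia| apply H; lia]. Qed.

Lemma sumR_nonneg f n : (forall i, (1 <= i <= n)%nat -> 0 <= f i) -> 0 <= sumR f n.
Proof. intros H. rewrite <- (sumR_zero n). apply sumR_le; auto. Qed.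

Definition G n := 1 + sumR (fun i => / INR i) n.

Lemma G_S n : G (S n) = G n + / INR (S n).
Proof. unfold G; simpl; ring. Qed.

Lemma G_mono n k : (n <= k)%nat -> G n <= G k.
Proof.
  induction 1; [lra|]. rewrite G_S. assert (0 < / INR (S m)) by (apply Rinv_0_lt_compat, lt_0_INR; lia). lra.
Qed.

Lemma G_ge1 n : 1 <= G n.
Proof. pose proof (G_mono 0 n ltac:(lia)). unfold G at 1 in H. simpl in H. lra. Qed.

Lemma G_le n : G n <= INR n + 1.
Proof.
  induction n. unfold G; simpl; lra.
  assert (/ INR (S n) <= 1).
  { rewrite <- Rinv_1. apply Rinv_le_contravar; [lra|]. apply (le_INR 1); lia. }
  rewrite G_S. set (t := / INR (S n)) in *. rewrite (S_INR n). lra.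
Qed.

Lemma INR_pow_ge n k : (1 <= n)%nat -> (1 <= k)%nat -> INR n <= INR n ^ k.
Proof.
  intros Hn Hk. destruct k; [lia|]. simpl. rewrite <- (Rmult_1_r (INR n)) at 1.
  apply Rmult_le_compat_l; [apply pos_INR|]. apply pow_R1_Rle. apply (le_INR 1); lia.
Qed.

Lemma w_bound k e l : (1 <= k)%nat -> is_sign e -> (1 <= l)%nat -> Rabs (w k e l) <= 2 / INR l.
Proof.
  intros Hk He Hl. unfold w.
  assert (H1 : 0 < INR l) by (apply lt_0_INR; lia).
  assert (H2 : INR l <= INR l ^ k) by (apply INR_pow_ge; auto).
  assert (Hn : Rabs (1 + e * (-1) ^ l) <= 2).
  { destruct He as [-> | ->]; destruct (pow_m1_sign l) as [E|E]; rewrite E; unfold Rabs; destruct Rcase_abs; lra. }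
  unfold Rdiv. rewrite Rabs_mult, Rabs_inv, (Rabs_right (INR l ^ k)) by lra.
  apply Rmult_le_compat; auto using Rabs_pos.
  left; apply Rinv_0_lt_compat; lra.
  apply Rinv_le_contravar; lra.
Qed.

Lemma Mn_bound ks es n : List.Forall (fun k => (1 <= k)%nat) ks -> List.Forall is_sign es ->
  Rabs (Mn n ks es) <= 2 ^ length ks * G n ^ length ks.
Proof.
  revert es n; induction ks as [|k ks IH]; intros es n Hk He.
  - rewrite Mn_nil, Rabs_R1. simpl; lra.
  - destruct es as [|e es].
    + rewrite Mn_nil2, Rabs_R1. pose proof (G_ge1 n).
      rewrite <- Rpow_mult_distr. apply pow_R1_Rle. lra.
    + inversion Hk; subst; inversion He; subst.
      rewrite Mn_cons. eapply Rle_trans; [apply sumR_abs|].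
      eapply Rle_trans.
      { apply (sumR_le _ (fun l => (2 ^ length ks * G n ^ length ks * 2) * / INR l)).
        intros l Hl. rewrite Rabs_mult.
        assert (HA := IH es (l - 1)%nat H2 H4).
        assert (HB := w_bound k e l H1 H3 ltac:(lia)). fold (w k e l).
        assert (G (l - 1) ^ length ks <= G n ^ length ks).
        { apply pow_incr. pose proof (G_ge1 (l-1)). split; [lra|]. apply G_mono; lia. }
        assert (0 <= 2 ^ length ks) by (apply pow_le; lra).
        assert (HC : Rabs (Mn (l - 1) ks es) <= 2 ^ length ks * G n ^ length ks).
        { eapply Rle_trans; [apply HA|]. apply Rmult_le_compat_l; auto. }
        unfold Rdiv in HB. rewrite Rmult_comm.
        replace (2 ^ length ks * G n ^ length ks * 2 * / INR l) with ((2 ^ length ks * G n ^ length ks) * (2 * / INR l)) by ring.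
        apply Rmult_le_compat; auto using Rabs_pos. }
      rewrite sumR_scal_l. simpl length. simpl pow.
      assert (sumR (fun l => / INR l) n <= G n) by (unfold G; lra).
      assert (0 <= 2 ^ length ks * G n ^ length ks).
      { apply Rmult_le_pos; apply pow_le; pose proof (G_ge1 n); lra. }
      nra.
Qed.

Lemma Mstar_bound ks es n : List.Forall (fun k => (1 <= k)%nat) ks -> List.Forall is_sign es ->
  Rabs (Mstar n ks es) <= 2 ^ length ks * G n ^ length ks.
Proof.
  revert es n; induction ks as [|k ks IH]; intros es n Hk He.
  - rewrite Mstar_nil, Rabs_R1. simpl; lra.
  - destruct es as [|e es].
    + rewrite Mstar_nil2, Rabs_R1. pose proof (G_ge1 n).
      rewrite <- Rpow_mult_distr. apply pow_R1_Rle. lra.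
    + inversion Hk; subst; inversion He; subst.
      rewrite Mstar_cons. eapply Rle_trans; [apply sumR_abs|].
      eapply Rle_trans.
      { apply (sumR_le _ (fun l => (2 ^ length ks * G n ^ length ks * 2) * / INR l)).
        intros l Hl. rewrite Rabs_mult.
        assert (HA := IH es l H2 H4).
        assert (HB := w_bound k e l H1 H3 ltac:(lia)). fold (w k e l).
        assert (G l ^ length ks <= G n ^ length ks).
        { apply pow_incr. pose proof (G_ge1 l). split; [lra|]. apply G_mono; lia. }
        assert (0 <= 2 ^ length ks) by (apply pow_le; lra).
        assert (HC : Rabs (Mstar l ks es) <= 2 ^ length ks * G n ^ length ks).
        { eapply Rle_trans; [apply HA|]. apply Rmult_le_compat_l; auto. }
        unfold Rdiv in HB. rewrite Rmult_comm.
        replace (2 ^ length ks * G n ^ length ks * 2 * / INR l) with ((2 ^ length ks * G n ^ length ks) * (2 * / INR l)) by ring.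
        apply Rmult_le_compat; auto using Rabs_pos. }
      rewrite sumR_scal_l. simpl length. simpl pow.
      assert (sumR (fun l => / INR l) n <= G n) by (unfold G; lra).
      assert (0 <= 2 ^ length ks * G n ^ length ks).
      { apply Rmult_le_pos; apply pow_le; pose proof (G_ge1 n); lra. }
      nra.
Qed.

Lemma sumR_S f n : sumR f (S n) = sumR f n + f (S n).
Proof. reflexivity. Qed.

Lemma abel (u : nat -> R) N :
  sumR (fun n => u n / (INR n * (INR n + 1))) N + u N / (INR N + 1)
  = u 0%nat + sumR (fun n => (u n - u (n - 1)%nat) / INR n) N.
Proof.
  induction N.
  - simpl. field.
  - rewrite !sumR_S. cbv beta. replace (S N - 1)%nat with N by lia.
    assert (H0 : 0 <= INR N) by apply pos_INR.
    rewrite S_INR.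
    transitivity (sumR (fun n => u n / (INR n * (INR n + 1))) N + u N / (INR N + 1)
       + (u (S N) / ((INR N + 1) * (INR N + 1 + 1)) + u (S N) / (INR N + 1 + 1) - u N / (INR N + 1))).
    { ring. }
    rewrite IHN. field. lra.
Qed.

Lemma pow_diff a b K : 0 <= b <= a -> a ^ S K - b ^ S K <= INR (S K) * a ^ K * (a - b).
Proof.
  intros Hab. induction K.
  - simpl. lra.
  - assert (b ^ S K <= a ^ S K) by (apply pow_incr; lra).
    assert (0 <= a ^ K) by (apply pow_le; lra).
    rewrite S_INR.
    replace (a ^ S (S K) - b ^ S (S K)) with (a * (a ^ S K - b ^ S K) + b ^ S K * (a - b)) by (simpl; ring).
    replace ((INR (S K) + 1) * a ^ S K * (a - b)) with (a * (INR (S K) * a ^ K * (a - b)) + a ^ S K * (a - b)) by (simpl; ring).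
    apply Rplus_le_compat.
    + apply Rmult_le_compat_l; lra.
    + apply Rmult_le_compat_r; lra.
Qed.

Lemma SK_bound K : exists B, forall N, sumR (fun n => G n ^ K / (INR n * (INR n + 1))) N <= B.
Proof.
  induction K as [|K [B HB]].
  - exists 1. intros N. pose proof (abel (fun _ => 1) N) as E. simpl in E.
    rewrite (sumR_ext (fun n => (1 - 1) / INR n) (fun _ => 0)) in E by (intros; unfold Rdiv; ring).
    rewrite sumR_zero in E.
    assert (0 <= 1 / (INR N + 1)) by (pose proof (pos_INR N); apply Rdiv_le_0_compat; lra).
    simpl pow. lra.
  - exists (1 + 2 * INR (S K) * B). intros N.
    pose proof (abel (fun n => G n ^ S K) N) as E. cbv beta in E.
    assert (0 <= G N ^ S K / (INR N + 1)).
    { pose proof (pos_INR N). pose proof (G_ge1 N). apply Rdiv_le_0_compat; [apply pow_le|]; lra. }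
    assert (HG0 : G 0 = 1) by (unfold G; simpl; ring).
    rewrite HG0, pow1 in E.
    assert (sumR (fun n => (G n ^ S K - G (n - 1)%nat ^ S K) / INR n) N
            <= 2 * INR (S K) * sumR (fun n => G n ^ K / (INR n * (INR n + 1))) N).
    { rewrite <- sumR_scal_l. apply sumR_le. intros n Hn.
      destruct n as [|n']; [lia|]. replace (S n' - 1)%nat with n' by lia.
      pose proof (G_S n') as GS. pose proof (G_ge1 n') as G1.
      assert (Hp : 0 < INR (S n')) by (apply lt_0_INR; lia).
      assert (Hp1 : 1 <= INR (S n')) by (apply (le_INR 1); lia).
      assert (0 < / INR (S n')) by (apply Rinv_0_lt_compat; lra).
      pose proof (pow_diff (G (S n')) (G n') K ltac:(lra)) as PD.
      assert (0 <= G (S n') ^ K) by (apply pow_le; lra).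
      assert (0 <= INR (S K)) by apply pos_INR.
      rewrite GS in PD at 3. replace (G n' + / INR (S n') - G n') with (/ INR (S n')) in PD by ring.
      unfold Rdiv.
      apply Rle_trans with (INR (S K) * G (S n') ^ K * / INR (S n') * / INR (S n')).
      { apply Rmult_le_compat_r; lra. }
      replace (2 * INR (S K) * (G (S n') ^ K * / (INR (S n') * (INR (S n') + 1))))
        with (INR (S K) * G (S n') ^ K * (2 / (INR (S n') * (INR (S n') + 1)))) by (field; lra).
      rewrite Rmult_assoc. apply Rmult_le_compat_l; [apply Rmult_le_pos; auto|].
      set (t := INR (S n')) in *.
      replace (/ t * / t) with ((t + 1) * / (t * t * (t + 1))) by (field; lra).
      replace (2 / (t * (t + 1))) with ((2 * t) * / (t * t * (t + 1))) by (field; lra).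
      apply Rmult_le_compat_r; [left; apply Rinv_0_lt_compat; nra | lra]. }
    assert (0 <= INR (S K)) by apply pos_INR.
    specialize (HB N).
    assert (INR (S K) * sumR (fun n => G n ^ K / (INR n * (INR n + 1))) N <= INR (S K) * B)
      by (apply Rmult_le_compat_l; auto).
    lra.
Qed.

Lemma sum_n_sumR (f : nat -> R) N : sum_n (fun i => f (S i)) N = sumR f (S N).
Proof.
  induction N.
  - rewrite sum_O. simpl. ring.
  - rewrite sum_Sn, IHN. reflexivity.
Qed.

Lemma ex_series_lim (a : nat -> R) : ex_series a -> ex_finite_lim_seq (sum_n a).
Proof. intros [l Hl]. exists l. exact Hl. Qed.

Lemma ex_series_bounded (b : nat -> R) B :
  (forall i, 0 <= b i) -> (forall N, sum_n b N <= B) -> ex_series b.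
Proof.
  intros H0 HB. destruct (ex_finite_lim_seq_incr (sum_n b) B) as [l Hl]; auto.
  - intros n. rewrite sum_Sn. unfold plus; simpl. specialize (H0 (S n)). lra.
  - exists l. exact Hl.
Qed.

Lemma is_lim_seq_pow_1 (v : nat -> R) K : is_lim_seq v 0 -> is_lim_seq (fun i => (1 + v i) ^ K) 1.
Proof.
  intros Hv. induction K.
  - simpl. apply is_lim_seq_const.
  - simpl. assert (H := is_lim_seq_mult' _ _ _ _ (is_lim_seq_plus' _ _ _ _ (is_lim_seq_const 1) Hv) IHK).
    replace ((1 + 0) * 1) with 1 in H by ring. exact H.
Qed.

Lemma ex_series_polygeom K r : 0 < r < 1 -> ex_series (fun i => (INR i + 1) ^ K * r ^ i).
Proof.
  intros Hr.
  assert (Hpos : forall i, 0 < (INR i + 1) ^ K * r ^ i).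
  { intros i. apply Rmult_lt_0_compat; apply pow_lt; [pose proof (pos_INR i); lra| lra]. }
  apply (ex_series_ext (fun i => Rabs ((INR i + 1) ^ K * r ^ i))).
  { intros i. apply Rabs_right. apply Rle_ge; left; apply Hpos. }
  apply (ex_series_DAlembert _ r); [lra| intros i; specialize (Hpos i); lra |].
  assert (Hv : is_lim_seq (fun i => / INR (S i)) 0).
  { replace (Finite 0) with (Rbar_inv p_infty) by reflexivity.
    apply is_lim_seq_inv; [| discriminate].
    apply (is_lim_seq_incr_1 INR). apply is_lim_seq_INR. }
  apply (is_lim_seq_ext (fun i => (1 + / INR (S i)) ^ K * r)).
  { intros i. assert (H1 : 0 < INR (S i)) by (apply lt_0_INR; lia).
    assert (E : INR (S i) + 1 = (INR i + 1) * (1 + / INR (S i))) by (rewrite S_INR in *; field; lra).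
    assert (Q : (INR (S i) + 1) ^ K * r ^ S i / ((INR i + 1) ^ K * r ^ i) = (1 + / INR (S i)) ^ K * r).
    { rewrite E, Rpow_mult_distr. simpl (r ^ S i). field. split; [apply Rgt_not_eq, pow_lt; lra|].
      apply Rgt_not_eq, pow_lt. pose proof (pos_INR i); lra. }
    rewrite Q. symmetry. apply Rabs_right. apply Rle_ge. apply Rmult_le_pos; [|lra]. apply pow_le.
    assert (0 < / INR (S i)) by (apply Rinv_0_lt_compat; lra). lra. }
  replace (Finite r) with (Rbar_mult 1 r) by (simpl; f_equal; ring).
  apply is_lim_seq_scal_r. apply is_lim_seq_pow_1; auto.
Qed.

Lemma ex_finite_lim_seq_ext (u v : nat -> R) : (forall n, u n = v n) -> ex_finite_lim_seq u -> ex_finite_lim_seq v.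
Proof. intros H [l Hl]. exists l. apply (is_lim_seq_ext u); auto. Qed.

Lemma Mi_cv ks es x : List.Forall (fun k => (1 <= k)%nat) ks -> List.Forall is_sign es -> Rabs x < 1 ->
  ex_finite_lim_seq (fun N => MnP (S N) ks es (fun l => x ^ l)).
Proof.
  intros Hk He Hx.
  destruct ks as [|k ks]; [exists 0; apply is_lim_seq_const|].
  destruct es as [|e es]; [exists 0; apply is_lim_seq_const|].
  inversion Hk; subst; inversion He; subst.
  set (t := fun l => x ^ l * w k e l * Mn (l - 1) ks es).
  apply (ex_finite_lim_seq_ext (sum_n (fun i => t (S i)))).
  { intros N. rewrite sum_n_sumR. reflexivity. }
  apply ex_series_lim.
  set (K := length ks). set (r := (1 + Rabs x) / 2).
  assert (Hr : 0 < r < 1) by (unfold r; pose proof (Rabs_pos x); lra).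
  apply (@ex_series_le R_AbsRing R_CompleteNormedModule _ (fun i => (2 * 2 ^ K) * ((INR i + 1) ^ K * r ^ i))).
  2:{ apply (ex_series_ext (fun i => scal (2 * 2 ^ K) ((INR i + 1) ^ K * r ^ i))); [reflexivity|].
      apply (@ex_series_scal_l R_AbsRing R_NormedModule). apply ex_series_polygeom; auto. }
  intros i. change (norm (t (S i))) with (Rabs (t (S i))). unfold t.
  replace (S i - 1)%nat with i by lia.
  rewrite !Rabs_mult.
  assert (A1 : Rabs (x ^ S i) <= r ^ i).
  { rewrite <- RPow_abs. simpl. apply Rle_trans with (Rabs x ^ i).
    - rewrite <- (Rmult_1_l (Rabs x ^ i)) at 2. apply Rmult_le_compat_r; [apply pow_le, Rabs_pos| lra].
    - apply pow_incr. split; [apply Rabs_pos| unfold r; lra]. }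
  assert (A2 : Rabs (w k e (S i)) <= 2).
  { eapply Rle_trans; [apply w_bound; auto; lia|].
    assert (1 <= INR (S i)) by (apply (le_INR 1); lia).
    unfold Rdiv. rewrite <- (Rmult_1_r 2) at 2. apply Rmult_le_compat_l; [lra|].
    rewrite <- Rinv_1. apply Rinv_le_contravar; lra. }
  assert (A3 : Rabs (Mn i ks es) <= 2 ^ K * (INR i + 1) ^ K).
  { eapply Rle_trans; [apply Mn_bound; auto|]. apply Rmult_le_compat_l; [apply pow_le; lra|].
    apply pow_incr. split; [pose proof (G_ge1 i); lra| apply G_le]. }
  assert (0 <= r ^ i) by (apply pow_le; lra).
  assert (0 <= 2 ^ K) by (apply pow_le; lra).
  assert (0 <= (INR i + 1) ^ K) by (apply pow_le; pose proof (pos_INR i); lra).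
  replace (2 * 2 ^ K * ((INR i + 1) ^ K * r ^ i)) with (r ^ i * 2 * (2 ^ K * (INR i + 1) ^ K)) by ring.
  apply Rmult_le_compat; auto using Rabs_pos.
  - apply Rmult_le_pos; apply Rabs_pos.
  - apply Rmult_le_compat; auto using Rabs_pos.
Qed.

Lemma conv_cv k1 ks h hs l1 ls e es :
  (1 <= k1)%nat -> (1 <= l1)%nat -> List.Forall (fun k => (1 <= k)%nat) ks ->
  List.Forall (fun k => (1 <= k)%nat) ls -> is_sign h -> is_sign e ->
  List.Forall is_sign hs -> List.Forall is_sign es ->
  ex_finite_lim_seq (fun N => CPg (k1 :: ks) (h :: hs) (l1 :: ls) (e :: es) (S N)).
Proof.
  intros Hk1 Hl1 Hks Hls Hh He Hhs Hes.
  set (c := fun n => Mn (n - 1) ks hs * Mstar n ls es / (INR n) ^ (k1 + l1)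
        * ((1 + e * (-1) ^ n) * (1 + h * (-1) ^ n) / 2)).
  apply (ex_finite_lim_seq_ext (sum_n (fun i => c (S i)))).
  { intros N. rewrite sum_n_sumR. reflexivity. }
  apply ex_series_lim.
  set (K := (length ks + length ls)%nat).
  destruct (SK_bound K) as [B HB].
  set (b := fun n => (4 * 2 ^ K) * (G n ^ K / (INR n * (INR n + 1)))).
  apply (@ex_series_le R_AbsRing R_CompleteNormedModule _ (fun i => b (S i))).
  2:{ apply (ex_series_bounded _ (4 * 2 ^ K * B)).
      - intros i. unfold b. apply Rmult_le_pos; [apply Rmult_le_pos; [lra| apply pow_le; lra]|].
        apply Rdiv_le_0_compat; [apply pow_le; pose proof (G_ge1 (S i)); lra|].
        pose proof (pos_INR (S i)). assert (0 < INR (S i)) by (apply lt_0_INR; lia). nra.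
      - intros N. rewrite (sum_n_sumR b N). unfold b. rewrite sumR_scal_l.
        apply Rmult_le_compat_l; [apply Rmult_le_pos; [lra| apply pow_le; lra]| apply HB]. }
  intros i. change (norm (c (S i))) with (Rabs (c (S i))). unfold c, b.
  replace (S i - 1)%nat with i by lia.
  set (t := INR (S i)).
  assert (Ht : 1 <= t) by (apply (le_INR 1); lia).
  unfold Rdiv. rewrite !Rabs_mult.
  assert (A1 : Rabs (Mn i ks hs) <= 2 ^ length ks * G (S i) ^ length ks).
  { eapply Rle_trans; [apply Mn_bound; auto|]. apply Rmult_le_compat_l; [apply pow_le; lra|].
    apply pow_incr. split; [pose proof (G_ge1 i); lra| apply G_mono; lia]. }
  assert (A2 : Rabs (Mstar (S i) ls es) <= 2 ^ length ls * G (S i) ^ length ls) by (apply Mstar_bound; auto).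
  assert (A3 : Rabs (/ t ^ (k1 + l1)) <= 2 * / (t * (t + 1))).
  { rewrite Rabs_inv, Rabs_right by (apply Rle_ge, pow_le; lra).
    apply Rle_trans with (/ (t * t)).
    - apply Rinv_le_contravar; [nra|]. replace (t * t) with (t ^ 2) by ring. apply Rle_pow; auto; lia.
    - replace (/ (t * t)) with ((t + 1) * / (t * t * (t + 1))) by (field; lra).
      replace (2 * / (t * (t + 1))) with ((2 * t) * / (t * t * (t + 1))) by (field; lra).
      apply Rmult_le_compat_r; [left; apply Rinv_0_lt_compat; nra | lra]. }
  assert (A4 : Rabs ((1 + e * (-1) ^ S i) * (1 + h * (-1) ^ S i)) * Rabs (/ 2) <= 2).
  { rewrite Rabs_inv, (Rabs_right 2) by lra.
    destruct He as [-> | ->], Hh as [-> | ->]; destruct (pow_m1_sign (S i)) as [E|E]; rewrite E;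
      unfold Rabs; destruct Rcase_abs; lra. }
  assert (0 <= G (S i)) by (pose proof (G_ge1 (S i)); lra).
  assert (P1 : 0 <= 2 ^ length ks * G (S i) ^ length ks) by (apply Rmult_le_pos; apply pow_le; lra).
  assert (P2 : 0 <= 2 ^ length ls * G (S i) ^ length ls) by (apply Rmult_le_pos; apply pow_le; lra).
  apply Rle_trans with ((2 ^ length ks * G (S i) ^ length ks) * (2 ^ length ls * G (S i) ^ length ls)
     * (2 * / (t * (t + 1))) * 2).
  - rewrite Rabs_mult in A4.
    apply Rmult_le_compat; auto.
    + repeat apply Rmult_le_pos; apply Rabs_pos.
    + repeat apply Rmult_le_pos; apply Rabs_pos.
    + apply Rmult_le_compat; auto using Rabs_pos.
      * apply Rmult_le_pos; apply Rabs_pos.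
      * apply Rmult_le_compat; auto using Rabs_pos.
  - unfold K. rewrite !pow_add. unfold Rdiv. apply Req_le. ring.
Qed.

Lemma lim_real (u : nat -> R) : ex_finite_lim_seq u -> is_lim_seq u (real (Lim_seq u)).
Proof. intros [l Hl]. rewrite (is_lim_seq_unique _ _ Hl). exact Hl. Qed.

Lemma is_lim_seq_sumR (f : nat -> nat -> R) (l : nat -> R) p :
  (forall j, (1 <= j <= p)%nat -> is_lim_seq (fun N => f j N) (l j)) ->
  is_lim_seq (fun N => sumR (fun j => f j N) p) (sumR l p).
Proof.
  induction p; intros H; simpl.
  - apply is_lim_seq_const.
  - apply is_lim_seq_plus'; [apply IHp; intros; apply H; lia| apply H; lia].
Qed.

Lemma Mi_MnP ks es x : ks <> [] -> es <> [] ->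
  Mi ks es x = real (Lim_seq (fun N => MnP (S N) ks es (fun l => x ^ l))).
Proof.
  intros Hk He. destruct ks as [|k ks]; [congruence|]. destruct es as [|e es]; [congruence|].
  unfold Mi, Series. f_equal. apply Lim_seq_ext. intros N.
  rewrite (sum_n_sumR (fun l => x ^ l * (1 + e * (-1) ^ l) / INR l ^ k * Mn (l - 1) ks es)).
  unfold MnP, w. apply sumR_ext; intros; unfold Rdiv; ring.
Qed.

Lemma conv_CPg ks hs ls es : conv ks hs ls es = real (Lim_seq (fun N => CPg ks hs ls es (S N))).
Proof.
  destruct ks as [|k ks]; [simpl; rewrite Lim_seq_const; auto|].
  destruct hs as [|h hs]; [simpl; rewrite Lim_seq_const; auto|].
  destruct ls as [|l ls]; [simpl; rewrite Lim_seq_const; auto|].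
  destruct es as [|e es]; [simpl; rewrite Lim_seq_const; auto|].
  unfold conv, Series. f_equal. apply Lim_seq_ext. intros N.
  rewrite (sum_n_sumR (fun n => Mn (n - 1) ks hs * Mstar n ls es / INR n ^ (k + l) *
      ((1 + e * (-1) ^ n) * (1 + h * (-1) ^ n) / 2))). reflexivity.
Qed.

Lemma Forall_skipn' {A} (P : A -> Prop) k l : List.Forall P l -> List.Forall P (skipn k l).
Proof. revert k; induction l; intros [|k] H; simpl; auto. inversion H; subst; auto. Qed.

Lemma sign_scale c l : is_sign c -> List.Forall is_sign l -> List.Forall is_sign (scale c l).
Proof. intros Hc H. unfold scale. apply Forall_map. eapply Forall_impl; [|exact H]. intros; apply sign_mult; auto. Qed.

Lemma sign_pvec l : List.Forall is_sign l -> List.Forall is_sign (pvec l).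
Proof. induction 1; simpl; constructor; auto. apply sign_mult; auto. apply prodR_sign; auto. Qed.

Lemma sign_sl c l : is_sign c -> List.Forall is_sign l -> List.Forall is_sign (sl c l).
Proof. intros Hc H; revert c Hc; induction H; intros c Hc; simpl; constructor; auto using sign_mult. Qed.

Lemma sign_qvec l : List.Forall is_sign l -> List.Forall is_sign (qvec l).
Proof.
  intros H. rewrite <- (scale1 (qvec l)), qvec_sl. apply Forall_rev, sign_sl; auto. left; auto.
Qed.

Lemma conv_cv' k1 ks hs ls es :
  (1 <= k1)%nat -> List.Forall (fun k => (1 <= k)%nat) ks -> List.Forall (fun k => (1 <= k)%nat) ls ->
  List.Forall is_sign hs -> List.Forall is_sign es ->
  ex_finite_lim_seq (fun N => CPg (k1 :: ks) hs ls es (S N)).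
Proof.
  intros H1 H2 H3 H4 H5.
  destruct hs as [|h hs]; [exists 0; apply is_lim_seq_const|].
  destruct ls as [|l ls]; [exists 0; apply is_lim_seq_const|].
  destruct es as [|e es]; [exists 0; apply is_lim_seq_const|].
  inversion H3; inversion H4; inversion H5; subst. apply conv_cv; auto.
Qed.

Lemma is_lim_seq_scal_l' (u : nat -> R) a (l : R) : is_lim_seq u l -> is_lim_seq (fun n => a * u n) (a * l).
Proof. intros H. apply (is_lim_seq_scal_l u a l H). Qed.

Theorem mainTheorem10 (k1 : nat) (ks : list nat) (h1 : R) (hs : list R)
  (m : list nat) (eps : list R) (x : R) :
  (1 <= k1)%nat -> List.Forall (fun k => (1 <= k)%nat) ks ->
  List.Forall (fun k => (1 <= k)%nat) m ->
  length hs = length ks -> length eps = length m -> (1 <= length m)%nat ->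
  is_sign h1 -> List.Forall is_sign hs -> List.Forall is_sign eps ->
  Rabs x < 1 ->
  let p := length m in
  let etabar := prodR (h1 :: hs) in
  Mi (rev m ++ (S k1) :: ks) (scale etabar (qvec eps) ++ pvec (h1 :: hs)) x
  = (-1) ^ p * Series (fun i => let n := S i in
        Mn (n - 1) ks (pvec hs) / (INR n) ^ (k1 + 1)
        * (1 + etabar * (-1) ^ n) * Tail n m eps x)
    - sumR (fun j => (-1) ^ j
        * Mi (rev (skipn (j - 1) m)) (scale (-1) (qvec (skipn j eps)) ++ [-1]) x
        * conv (k1 :: ks) (pvec (h1 :: hs)) (1%nat :: firstn (j - 1) m)
               (scale (-1) (pvec (firstn j eps)))) p
    - sumR (fun j => (-1) ^ j
        * Mi (rev (skipn (j - 1) m)) (qvec (skipn j eps) ++ [1]) x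
        * conv (k1 :: ks) (pvec (h1 :: hs)) (1%nat :: firstn (j - 1) m)
               (pvec (firstn j eps))) p.
Proof.
  intros Hk1 Hks Hm Hl1 Hl2 Hp Hh1 Hhs Heps Hx p eb.
  assert (Hsh : is_sign (prodR hs)) by (apply prodR_sign; auto).
  assert (Heb : is_sign eb) by (unfold eb; simpl; apply sign_mult; auto).
  set (phi := fun l : nat => x ^ l).
  set (P := fun N => MnP (S N) (rev m ++ S k1 :: ks) (scale eb (qvec eps) ++ pvec (h1 :: hs)) phi).
  set (Af := fun n => Mn (n - 1) ks (pvec hs) / INR n ^ (k1 + 1) * (1 + eb * (-1) ^ n) * Tail n m eps x).
  set (Mm := fun j N => MnP (S N) (rev (skipn (j - 1) m)) (scale (-1) (qvec (skipn j eps)) ++ [-1]) phi).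
  set (Mp := fun j N => MnP (S N) (rev (skipn (j - 1) m)) (qvec (skipn j eps) ++ [1]) phi).
  set (Cm := fun j N => CPg (k1 :: ks) (pvec (h1 :: hs)) (1%nat :: firstn (j - 1) m) (scale (-1) (pvec (firstn j eps))) (S N)).
  set (Cp := fun j N => CPg (k1 :: ks) (pvec (h1 :: hs)) (1%nat :: firstn (j - 1) m) (pvec (firstn j eps)) (S N)).
  assert (HPk : List.Forall (fun k => (1 <= k)%nat) (rev m ++ S k1 :: ks)).
  { apply Forall_app; split; [apply Forall_rev; auto| constructor; auto; lia]. }
  assert (HPe : List.Forall is_sign (scale eb (qvec eps) ++ pvec (h1 :: hs))).
  { apply Forall_app; split; [apply sign_scale, sign_qvec; auto| apply sign_pvec; constructor; auto]. }
  assert (LP := lim_real P (Mi_cv _ _ x HPk HPe Hx)).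
  assert (Hskk : forall j, List.Forall (fun k => (1 <= k)%nat) (rev (skipn (j - 1) m))).
  { intros j. apply Forall_rev, Forall_skipn'; auto. }
  assert (LMm : forall j, is_lim_seq (Mm j) (real (Lim_seq (Mm j)))).
  { intros j. apply lim_real, Mi_cv; auto. apply Forall_app; split.
    - apply sign_scale; [right; auto|]. apply sign_qvec, Forall_skipn'; auto.
    - constructor; [right; auto| constructor]. }
  assert (LMp : forall j, is_lim_seq (Mp j) (real (Lim_seq (Mp j)))).
  { intros j. apply lim_real, Mi_cv; auto. apply Forall_app; split.
    - apply sign_qvec, Forall_skipn'; auto.
    - constructor; [left; auto| constructor]. }
  assert (Hfk : forall j, List.Forall (fun k => (1 <= k)%nat) (1%nat :: firstn (j - 1) m)).
  { intros j. constructor; [lia| apply Forall_firstn'; auto]. }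
  assert (Hph : List.Forall is_sign (pvec (h1 :: hs))) by (apply sign_pvec; constructor; auto).
  assert (LCm : forall j, is_lim_seq (Cm j) (real (Lim_seq (Cm j)))).
  { intros j. apply lim_real, conv_cv'; auto.
    apply sign_scale; [right; auto|]. apply sign_pvec, Forall_firstn'; auto. }
  assert (LCp : forall j, is_lim_seq (Cp j) (real (Lim_seq (Cp j)))).
  { intros j. apply lim_real, conv_cv'; auto. apply sign_pvec, Forall_firstn'; auto. }
  set (lP := real (Lim_seq P)) in *.
  set (SM := sumR (fun j => (-1) ^ j * real (Lim_seq (Mm j)) * real (Lim_seq (Cm j))) p).
  set (SP := sumR (fun j => (-1) ^ j * real (Lim_seq (Mp j)) * real (Lim_seq (Cp j))) p).
  assert (Hsq : (-1) ^ p * (-1) ^ p = 1).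
  { rewrite <- Rpow_mult_distr. replace (-1 * -1) with 1 by ring. apply pow1. }
  assert (HF : forall N, sumR Af (S N) = (-1) ^ p * (P N
      + sumR (fun j => (-1) ^ j * Mm j N * Cm j N) p + sumR (fun j => (-1) ^ j * Mp j N * Cp j N) p)).
  { intros N. unfold P. pose proof (Fin k1 ks h1 hs m eps x (S N) Hl1 Hl2 Hh1 Hhs Heps) as FF.
    fold eb p phi in FF. rewrite FF.
    unfold Mm, Mp, Cm, Cp. fold Af.
    transitivity (((-1) ^ p * (-1) ^ p) * sumR Af (S N)); [rewrite Hsq; ring| ring]. }
  assert (LA : is_lim_seq (fun N => sumR Af (S N)) ((-1) ^ p * (lP + SM + SP))).
  { apply (is_lim_seq_ext (fun N => (-1) ^ p * (P N
      + sumR (fun j => (-1) ^ j * Mm j N * Cm j N) p + sumR (fun j => (-1) ^ j * Mp j N * Cp j N) p))).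
    { intros N; rewrite HF; auto. }
    apply is_lim_seq_scal_l'.
    apply is_lim_seq_plus'; [apply is_lim_seq_plus'; auto|].
    - apply is_lim_seq_sumR; intros j _. apply is_lim_seq_mult'; [apply is_lim_seq_scal_l'|]; auto.
    - apply is_lim_seq_sumR; intros j _. apply is_lim_seq_mult'; [apply is_lim_seq_scal_l'|]; auto. }
  assert (ESer : Series (fun i => Af (S i)) = (-1) ^ p * (lP + SM + SP)).
  { unfold Series.
    assert (EE : Lim_seq (sum_n (fun i => Af (S i))) = Lim_seq (fun N => sumR Af (S N)))
      by (apply Lim_seq_ext; intros n; exact (sum_n_sumR Af n)).
    rewrite EE.
    rewrite (is_lim_seq_unique _ _ LA). reflexivity. }
  change (Series (fun i => Af (S i))) with (Series (fun i => let n := S i in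
        Mn (n - 1) ks (pvec hs) / (INR n) ^ (k1 + 1) * (1 + eb * (-1) ^ n) * Tail n m eps x)) in ESer.
  rewrite ESer.
  rewrite Mi_MnP by (let E := fresh in intros E; apply app_eq_nil in E; destruct E as [_ E]; simpl in E; discriminate). fold phi. fold P. fold lP.
  rewrite (sumR_ext_le _ (fun j => (-1) ^ j * real (Lim_seq (Mm j)) * real (Lim_seq (Cm j)))).
  2:{ intros j Hj. rewrite Mi_MnP, conv_CPg.
      - reflexivity.
      - rewrite <- length_zero_iff_nil, length_rev, length_skipn. lia.
      - destruct (scale (-1) (qvec (skipn j eps))); discriminate. }
  rewrite (sumR_ext_le (fun j => (-1) ^ j * Mi (rev (skipn (j - 1) m)) (qvec (skipn j eps) ++ [1]) x *
     conv (k1 :: ks) (pvec (h1 :: hs)) (1%nat :: firstn (j - 1) m) (pvec (firstn j eps)))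
     (fun j => (-1) ^ j * real (Lim_seq (Mp j)) * real (Lim_seq (Cp j)))).
  2:{ intros j Hj. rewrite Mi_MnP, conv_CPg.
      - reflexivity.
      - rewrite <- length_zero_iff_nil, length_rev, length_skipn. lia.
      - destruct (qvec (skipn j eps)); discriminate. }
  fold SM SP.
  transitivity (((-1) ^ p * (-1) ^ p) * (lP + SM + SP) - SM - SP); [rewrite Hsq; ring| ring].
Qed.
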